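(* Let $a\in(0,1)$, $r\ge1$, $\theta\in\mathcal{D}_{a,r}$ and $X\sim N(\theta^*,\sigma^2I_d)$. Then $$\mathbb{E}\,\omega\Big(\frac{\langle\theta,X\rangle}{\sigma^2}\Big)>1-e^{-(as/r)^2/5}.$$
   Context: Fix $d\ge1$, $\sigma>0$ and $\theta^*\in\mathbb{R}^d\setminus\{0\}$. Let $\omega(t):=1/(1+e^{-2t})$ and $s:=\|\theta^*\|/\sigma$. For $a\in(0,1)$ and $r\ge1$ define $\mathcal{H}_a:=\{\theta:\langle\theta,\theta^*\rangle\ge a\|\theta^*\|^2\}$, $\mathcal{B}_r:=\{\theta:\|\theta\|\le r\|\theta^*\|\}$ and $\mathcal{D}_{a,r}:=\mathcal{H}_a\cap\mathcal{B}_r$. *)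

(* Defs.v *)
From Stdlib Require Import Reals Lra.
Open Scope R_scope.

(* Vectors of R^d are represented as functions nat -> R; only coordinates
   0..d-1 are used. *)
Fixpoint dot (d : nat) (u v : nat -> R) : R :=
  match d with
  | O => 0
  | S k => dot k u v + u k * v k
  end.

Definition vnorm (d : nat) (u : nat -> R) : R := sqrt (dot d u u).

Definition vsub (u v : nat -> R) : nat -> R := fun i => u i - v i.

Definition omega (t : R) : R := / (1 + exp (- (2 * t))).

(* Improper Riemann integral over R: f is Riemann integrable on every
   [-n,n] and these integrals converge to l.  (Used only for nonnegative
   continuous integrands, where this coincides with the Lebesgue integral.) *)
Definition improper_int (f : R -> R) (l : R) : Prop :=
  exists I : nat -> R,
    (forall n : nat, exists pr : Riemann_integrable f (- INR n) (INR n),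
        RiemannInt pr = I n) /\
    Un_cv I l.

Definition upd (x : nat -> R) (k : nat) (t : R) : nat -> R :=
  fun i => if Nat.eqb i k then t else x i.

Fixpoint int_Rd (d : nat) (F : (nat -> R) -> R) (l : R) : Prop :=
  match d with
  | O => l = F (fun _ => 0)
  | S k => exists G : R -> R,
      (forall t, int_Rd k (fun x => F (upd x k t)) (G t)) /\
      improper_int G l
  end.

Definition gauss_density (d : nat) (mu : nat -> R) (sigma : R) (x : nat -> R) : R :=
  / Rpower (2 * PI * sigma ^ 2) (INR d / 2) *
  exp (- (dot d (vsub x mu) (vsub x mu)) / (2 * sigma ^ 2)).

Definition gauss_expect (d : nat) (mu : nat -> R) (sigma : R)
  (g : (nat -> R) -> R) (E : R) : Prop :=
  int_Rd d (fun x => g x * gauss_density d mu sigma x) E.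

Definition in_H (d : nat) (thstar : nat -> R) (a : R) (th : nat -> R) : Prop :=
  dot d th thstar >= a * (vnorm d thstar) ^ 2.
Definition in_B (d : nat) (thstar : nat -> R) (r : R) (th : nat -> R) : Prop :=
  vnorm d th <= r * vnorm d thstar.
Definition in_D (d : nat) (thstar : nat -> R) (a r : R) (th : nat -> R) : Prop :=
  in_H d thstar a th /\ in_B d thstar r th.

(* Main.v *)
From Coquelicot Require Import Coquelicot.
Require Import Defs.
From Stdlib Require Import Reals Lra Psatz FunctionalExtensionality ZArith.
Open Scope R_scope.

Ltac rfix := match goal with |- ?a = ?b => change (@eq R a b) end.

Definition gf (t : R) := exp (- (t * t)).

Lemma gf_cont x : continuous gf x.
Proof.
  unfold gf. apply (ex_derive_continuous (K:=R_AbsRing) (V:=R_NormedModule)). auto_derive; auto.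
Qed.

Lemma ex_RInt_gf a b : ex_RInt gf a b.
Proof. apply (ex_RInt_continuous (V:=R_CompleteNormedModule)). intros; apply gf_cont. Qed.

Definition fpar (x t : R) := exp (- (x * x * (1 + t * t))) / (1 + t * t).

Lemma Derive_fpar x t : Derive (fun u => fpar u t) x = - 2 * x * exp (- (x * x * (1 + t * t))).
Proof.
  apply is_derive_unique. unfold fpar. auto_derive.
  - nra.
  - field. nra.
Qed.

Lemma cont_fpar x t : continuous (fun t => fpar x t) t.
Proof.
  unfold fpar. apply (ex_derive_continuous (K:=R_AbsRing) (V:=R_NormedModule)). auto_derive. nra.
Qed.
Lemma dI x : is_derive (fun x => RInt gf 0 x) x (gf x).
Proof.
  apply (is_derive_RInt (V:=R_NormedModule) gf (fun x => RInt gf 0 x) 0 x).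
  apply filter_forall. intros. apply (RInt_correct (V:=R_CompleteNormedModule)), ex_RInt_gf. apply gf_cont.
Qed.

Lemma dR x : is_derive (fun x => RInt (fun t => fpar x t) 0 1) x (-2 * gf x * RInt gf 0 x).
Proof.
  assert (H := is_derive_RInt_param (fun x t => fpar x t) 0 1 x).
  simpl in H.
  match type of H with _ -> _ -> _ -> is_derive _ _ ?v => replace (-2 * gf x * RInt gf 0 x) with v end.
  apply H; clear H.
  - apply filter_forall. intros. eexists. apply is_derive_Reals. unfold fpar.
    apply derivable_pt_lim_ext with (fun u => exp (- (u * u * (1 + t * t))) * / (1 + t * t)). intros; reflexivity.
    apply is_derive_Reals. auto_derive_fun (fun u => exp (- (u * u * (1 + t * t))) * / (1 + t * t)).
    intro H0. apply H0. nra.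
  - intros t _. apply continuity_2d_pt_ext with (fun u v => - 2 * u * exp (- (u * u * (1 + v * v)))).
    intros; rewrite Derive_fpar; reflexivity.
    apply continuity_2d_pt_mult. apply continuity_2d_pt_mult. apply continuity_2d_pt_const. apply continuity_2d_pt_id1.
    apply continuity_1d_2d_pt_comp with (f := exp). apply derivable_continuous_pt. apply derivable_pt_exp.
    apply continuity_2d_pt_opp. apply continuity_2d_pt_mult. apply continuity_2d_pt_mult; apply continuity_2d_pt_id1.
    apply continuity_2d_pt_plus. apply continuity_2d_pt_const. apply continuity_2d_pt_mult; apply continuity_2d_pt_id2.
  - apply filter_forall. intros y. apply (ex_RInt_continuous (V:=R_CompleteNormedModule)). intros. apply cont_fpar.
  - assert (E: RInt (fun y => x * (gf (x*y+0))) 0 1 = RInt gf 0 x).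
    { transitivity (RInt gf (x*0+0) (x*1+0)).
      apply (RInt_comp_lin (V:=R_CompleteNormedModule) gf x 0 0 1). apply ex_RInt_gf.
      f_equal; simpl; lra. }
    rewrite <- E.
    assert (E2: RInt (fun t => (-2 * gf x) * (x * (gf (x * t + 0)))) 0 1 = (-2 * gf x) * RInt (fun y => x * (gf (x*y+0))) 0 1).
    { apply (RInt_scal (V:=R_CompleteNormedModule)).
      apply (ex_RInt_comp_lin (V:=R_CompleteNormedModule) gf x 0 0 1).
      apply ex_RInt_gf. }
    rewrite <- E2. apply RInt_ext.
    intros t _. rewrite Derive_fpar. unfold gf.
    replace (- (x * x * (1 + t * t))) with (- (x * x) + - ((x * t + 0) * (x * t + 0))) by ring.
    rewrite exp_plus. unfold Rminus. idtac. match goal with |- ?a = ?b => change (@eq R a b) end; ring.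
Qed.

Lemma ex_RInt_fpar x a b : ex_RInt (fun t => fpar x t) a b.
Proof. apply (ex_RInt_continuous (V:=R_CompleteNormedModule)). intros. apply cont_fpar. Qed.

Lemma is_derive_eqv (f : R -> R) x (l l' : R) : is_derive f x l -> l = l' -> is_derive f x l'.
Proof. intros; subst; auto. Qed.

Lemma hderiv x : is_derive (fun x => RInt gf 0 x * RInt gf 0 x + RInt (fun t => fpar x t) 0 1) x 0.
Proof.
  assert (H := is_derive_plus (fun x => RInt gf 0 x * RInt gf 0 x) (fun x => RInt (fun t => fpar x t) 0 1) x _ _
     (is_derive_mult (fun x => RInt gf 0 x) (fun x => RInt gf 0 x) x _ _ (dI x) (dI x) Rmult_comm) (dR x)).
  eapply is_derive_eqv. eapply (is_derive_ext (V:=R_NormedModule)); [| exact H]. intros; reflexivity.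
  unfold plus, mult; simpl. ring.
Qed.

Lemma hval x : 0 < x -> RInt gf 0 x * RInt gf 0 x + RInt (fun t => fpar x t) 0 1 = PI / 4.
Proof.
  intros Hx.
  assert (E := eq_is_derive (fun x => RInt gf 0 x * RInt gf 0 x + RInt (fun t => fpar x t) 0 1) 0 x
     (fun t _ => hderiv t) Hx).
  simpl in E. rewrite <- E. rewrite (RInt_point (V:=R_CompleteNormedModule)).
  assert (E2 : is_RInt (fun t => fpar 0 t) 0 1 (minus (atan 1) (atan 0))).
  { apply (is_RInt_ext (V:=R_CompleteNormedModule) (fun t => / (1 + t²))).
    intros t _. unfold fpar. rewrite Rmult_0_l, Rmult_0_l, Ropp_0, exp_0. unfold Rsqr. rfix. field. nra.
    apply (is_RInt_derive (V:=R_CompleteNormedModule) atan (fun t => / (1 + t²))).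
    intros; apply is_derive_atan.
    intros. apply (ex_derive_continuous (K:=R_AbsRing) (V:=R_NormedModule)). auto_derive. unfold Rsqr; nra. }
  rewrite (is_RInt_unique _ _ _ _ E2). rewrite atan_1, atan_0. unfold minus, plus, opp, zero; simpl. ring.
Qed.

Lemma exp_le_mono a b : a <= b -> exp a <= exp b.
Proof. intros H. destruct (Rle_lt_or_eq_dec _ _ H) as [H1|H1]. apply Rlt_le, exp_increasing; auto. subst; lra. Qed.

Lemma Rpos_le x : 0 <= RInt (fun t => fpar x t) 0 1 <= exp (- (x * x)).
Proof.
  split.
  - apply RInt_ge_0. lra. apply ex_RInt_fpar. intros t _. unfold fpar.
    apply Rle_mult_inv_pos. apply Rlt_le, exp_pos. nra.
  - apply Rle_trans with (RInt (fun _ => exp (- (x*x))) 0 1).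
    apply RInt_le. lra. apply ex_RInt_fpar. apply (ex_RInt_const (V:=R_CompleteNormedModule)).
    intros t Ht. unfold fpar. apply Rle_trans with (exp (- (x * x * (1 + t * t)))).
    rewrite <- (Rmult_1_r (exp _)) at 2. apply Rmult_le_compat_l. apply Rlt_le, exp_pos.
    rewrite <- Rinv_1. apply Rinv_le_contravar; nra.
    apply exp_le_mono. nra.
    rewrite (RInt_const (V:=R_CompleteNormedModule)). unfold scal; simpl; unfold mult; simpl. lra.
Qed.

Lemma I_ge0 x : 0 <= x -> 0 <= RInt gf 0 x.
Proof. intros. apply RInt_ge_0; auto. apply ex_RInt_gf. intros; unfold gf; apply Rlt_le, exp_pos. Qed.

Lemma J_sym x : RInt gf (-x) x = 2 * RInt gf 0 x.
Proof.
  rewrite <- (RInt_Chasles (V:=R_CompleteNormedModule) gf (-x) 0 x) by apply ex_RInt_gf.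
  assert (E: RInt (fun y => (-1) * (gf ((-1)*y+0))) 0 x = RInt gf 0 (-x)).
  { transitivity (RInt gf ((-1)*0+0) ((-1)*x+0)).
    apply (RInt_comp_lin (V:=R_CompleteNormedModule) gf (-1) 0 0 x). apply ex_RInt_gf.
    f_equal; simpl; lra. }
  assert (E2: RInt (fun y => (-1) * (gf ((-1)*y+0))) 0 x = (-1) * RInt gf 0 x).
  { rewrite <- (RInt_scal (V:=R_CompleteNormedModule)). apply RInt_ext. intros y _. unfold gf.
    unfold scal; simpl; unfold mult; simpl. rfix. replace ((-1*y+0)*(-1*y+0)) with (y*y) by ring. reflexivity. apply ex_RInt_gf. }
  rewrite <- (opp_RInt_swap (V:=R_CompleteNormedModule)) by apply ex_RInt_gf.
  rewrite <- E, E2. unfold plus, opp; simpl. ring.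
Qed.

Lemma J_bound x : 0 < x -> Rabs (RInt gf (-x) x - sqrt PI) <= 4 * exp (- (x*x)).
Proof.
  intros Hx. rewrite J_sym. assert (H := hval x Hx). assert (H2 := Rpos_le x). assert (H3 := I_ge0 x (Rlt_le _ _ Hx)).
  set (I := RInt gf 0 x) in *. set (Rr := RInt (fun t => fpar x t) 0 1) in *.
  assert (Hs : 0 < sqrt PI) by (apply sqrt_lt_R0, PI_RGT_0).
  assert (Hs2 : sqrt PI * sqrt PI = PI) by (apply sqrt_sqrt; apply Rlt_le, PI_RGT_0).
  assert (Hs1 : 1 <= sqrt PI).
  { rewrite <- sqrt_1. apply sqrt_le_1_alt. assert (H4 := PI_RGT_0). pose proof PI2_1. lra. }
  assert (E : 2 * I - sqrt PI = 4 * (I * I - PI / 4) / (2 * I + sqrt PI)).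
  { set (p := sqrt PI) in *. rewrite <- Hs2. field. lra. }
  rewrite E. rewrite Rabs_div by lra. rewrite (Rabs_right (2 * I + sqrt PI)) by lra.
  apply Rle_trans with (4 * Rr / 1).
  unfold Rdiv. apply Rmult_le_compat. apply Rabs_pos. apply Rlt_le, Rinv_0_lt_compat. lra.
  rewrite Rabs_mult, Rabs_right by lra. rewrite Rabs_left1 by lra. lra.
  apply Rinv_le_contravar; lra. lra.
Qed.

Definition cont (f : R -> R) := forall t, continuity_pt f t.

Lemma cont_ex (f : R -> R) a b : cont f -> ex_RInt f a b.
Proof.
  intros H. apply (ex_RInt_continuous (V:=R_CompleteNormedModule)). intros z _.
  apply continuity_pt_filterlim. apply H.
Qed.

Definition IIc (f : R -> R) (l : R) := cont f /\ Un_cv (fun n => RInt f (- INR n) (INR n)) l.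

Lemma IIc_unique f l m : IIc f l -> IIc f m -> l = m.
Proof. intros [_ H1] [_ H2]. eapply UL_sequence; eauto. Qed.

Lemma cont_plus f g : cont f -> cont g -> cont (fun t => f t + g t).
Proof. intros H1 H2 t. apply continuity_pt_plus; auto. Qed.
Lemma cont_mult f g : cont f -> cont g -> cont (fun t => f t * g t).
Proof. intros H1 H2 t. apply continuity_pt_mult; auto. Qed.
Lemma cont_const c : cont (fun _ => c).
Proof. intros t. apply continuity_pt_const. intros x y; auto. Qed.
Lemma cont_scal c f : cont f -> cont (fun t => c * f t).
Proof. intros H. apply cont_mult; auto. apply cont_const. Qed.

Lemma IIc_lin f g l m al be : IIc f l -> IIc g m -> IIc (fun t => al * f t + be * g t) (al * l + be * m).
Proof.
  intros [Hf Hl] [Hg Hm]. split. apply cont_plus; apply cont_scal; auto.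
  apply Un_cv_ext with (fun n => al * RInt f (- INR n) (INR n) + be * RInt g (- INR n) (INR n)).
  2:{ apply CV_plus; apply CV_mult; auto; intros e He; exists 0%nat; intros; unfold Rdist; rewrite Rminus_diag, Rabs_R0; auto. }
  intros n.
  assert (E1: RInt (fun t => al * f t + be * g t) (- INR n) (INR n) =
     plus (RInt (fun t => scal al (f t)) (- INR n) (INR n)) (RInt (fun t => scal be (g t)) (- INR n) (INR n))).
  { rewrite <- (RInt_plus (V:=R_CompleteNormedModule)). reflexivity.
    apply (ex_RInt_scal (V:=R_CompleteNormedModule)), cont_ex, Hf.
    apply (ex_RInt_scal (V:=R_CompleteNormedModule)), cont_ex, Hg. }
  rewrite E1. rewrite !(RInt_scal (V:=R_CompleteNormedModule)) by (apply cont_ex; auto). reflexivity.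
Qed.



Lemma IIc_ext f g l : (forall t, f t = g t) -> IIc f l -> IIc g l.
Proof.
  intros E [Hf Hl]. assert (fg : f = g) by (apply functional_extensionality; auto). subst; split; auto.
Qed.

Lemma IIc_scal f l al : IIc f l -> IIc (fun t => al * f t) (al * l).
Proof.
  intros H. assert (H2 := IIc_lin f f l l al 0 H H).
  replace (al * l) with (al * l + 0 * l) by ring. eapply IIc_ext; [|exact H2]. intros; simpl; ring.
Qed.

Lemma IIc_le f g l m : IIc f l -> IIc g m -> (forall t, f t <= g t) -> l <= m.
Proof.
  intros [Hf Hl] [Hg Hm] H. eapply Rle_cv_lim; [|exact Hl|exact Hm].
  intros n. apply RInt_le. pose proof (pos_INR n); lra. apply cont_ex; auto. apply cont_ex; auto. intros; auto.
Qed.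

Lemma IIc_abs f g l m : IIc f l -> IIc g m -> (forall t, Rabs (f t) <= g t) -> Rabs l <= m.
Proof.
  intros Hf Hg H. apply Rabs_le. split.
  - assert (H2 := IIc_scal _ _ (-1) Hg). replace (-m) with (-1 * m) by ring.
    apply (IIc_le _ _ _ _ H2 Hf). intros t; specialize (H t). apply Rabs_le_between in H. lra.
  - apply (IIc_le _ _ _ _ Hf Hg). intros t; specialize (H t). apply Rabs_le_between in H. lra.
Qed.

Lemma RInt_mono_int f a b a' b' : a' <= a -> a <= b -> b <= b' -> cont f -> (forall t, 0 <= f t) ->
  RInt f a b <= RInt f a' b'.
Proof.
  intros H1 H2 H3 Hf Hp.
  rewrite <- (RInt_Chasles (V:=R_CompleteNormedModule) f a' a b') by (apply cont_ex; auto).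
  rewrite <- (RInt_Chasles (V:=R_CompleteNormedModule) f a b b') by (apply cont_ex; auto).
  unfold plus; simpl.
  assert (0 <= RInt f a' a) by (apply RInt_ge_0; auto; apply cont_ex; auto).
  assert (0 <= RInt f b b') by (apply RInt_ge_0; auto; apply cont_ex; auto).
  lra.
Qed.

Lemma IIc_exists f g m : cont f -> (forall t, 0 <= f t <= g t) -> IIc g m -> exists l, IIc f l /\ l <= m.
Proof.
  intros Hf Hfg [Hg Hm].
  assert (Hgr : Un_growing (fun n => RInt g (- INR n) (INR n))).
  { intros n. rewrite S_INR. apply RInt_mono_int; auto; try (pose proof (pos_INR n); lra).
    intros t; specialize (Hfg t); lra. }
  assert (Hfr : Un_growing (fun n => RInt f (- INR n) (INR n))).
  { intros n. rewrite S_INR. apply RInt_mono_int; auto; try (pose proof (pos_INR n); lra).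
    intros t; specialize (Hfg t); lra. }
  assert (Hb : forall n, RInt f (- INR n) (INR n) <= m).
  { intros n. apply Rle_trans with (RInt g (- INR n) (INR n)).
    apply RInt_le. pose proof (pos_INR n); lra. apply cont_ex; auto. apply cont_ex; auto. intros; apply Hfg.
    apply (growing_ineq (fun n => RInt g (- INR n) (INR n))); auto. }
  destruct (growing_cv _ Hfr) as [l Hl]. exists m. intros x [n ->]. apply Hb.
  exists l. split. split; auto.
  eapply Rle_cv_lim; [|exact Hl|]. intros n; apply Hb. intros e He; exists 0%nat; intros; unfold Rdist; rewrite Rminus_diag, Rabs_R0; auto.
Qed.
Lemma nat_above (s : R) : exists N : nat, s <= INR N.
Proof.
  destruct (archimed (Rabs s)) as [H1 _].
  exists (Z.to_nat (up (Rabs s))). rewrite INR_IZR_INZ. rewrite Z2Nat.id.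
  pose proof (Rle_abs s). lra.
  apply le_IZR. pose proof (Rabs_pos s). lra.
Qed.

Lemma cont_shift f s : cont f -> cont (fun t => f (t + s)).
Proof.
  intros H t. apply (continuity_pt_comp (fun t => t + s) f). apply continuity_pt_plus.
  apply derivable_continuous_pt, derivable_pt_id. apply continuity_pt_const. intros x y; auto. apply H.
Qed.

Lemma IIc_shift f l s : IIc f l -> (forall t, 0 <= f t) -> IIc (fun t => f (t + s)) l.
Proof.
  intros [Hf Hl] Hp. split. apply cont_shift; auto.
  destruct (nat_above (Rabs s)) as [N HN].
  assert (Hs := proj1 (Rabs_le_between s (INR N)) HN).
  assert (E : forall n, RInt (fun t => f (t + s)) (- INR n) (INR n) = RInt f (- INR n + s) (INR n + s)).
  { intros n. transitivity (RInt f (1 * (- INR n) + s) (1 * INR n + s)).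
    transitivity (RInt (fun y => scal 1 (f (1 * y + s))) (- INR n) (INR n)).
    apply RInt_ext. intros; unfold scal; simpl; unfold mult; simpl. rfix. rewrite !Rmult_1_l. reflexivity.
    apply (RInt_comp_lin (V:=R_CompleteNormedModule)). apply cont_ex; auto.
    f_equal; simpl; ring. }
  intros e He. destruct (Hl e He) as [N1 HN1]. exists (N1 + N)%nat. intros n Hn.
  rewrite E. unfold Rdist in *.
  assert (Ha := HN1 (n - N)%nat ltac:(lia)). assert (Hb := HN1 (n + N)%nat ltac:(lia)).
  rewrite minus_INR in Ha by lia. rewrite plus_INR in Hb.
  assert (L1 : RInt f (- (INR n - INR N)) (INR n - INR N) <= RInt f (- INR n + s) (INR n + s)).
  { apply RInt_mono_int; auto. lra. assert (INR N <= INR n) by (apply le_INR; lia). lra. lra. }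
  assert (L2 : RInt f (- INR n + s) (INR n + s) <= RInt f (- (INR n + INR N)) (INR n + INR N)).
  { apply RInt_mono_int; auto. lra. pose proof (pos_INR n); lra. lra. }
  apply Rabs_def2 in Ha. apply Rabs_def2 in Hb. apply Rabs_def1; lra.
Qed.

Definition phi (s c t : R) := exp (- ((t - c) * (t - c)) / (2 * s ^ 2)).

Lemma cont_phi s c : cont (phi s c).
Proof.
  intros t. apply continuity_pt_filterlim.
  apply (ex_derive_continuous (K:=R_AbsRing) (V:=R_NormedModule) (fun t => exp (- ((t - c) * (t - c)) / (2 * s ^ 2)))). auto_derive. auto.
Qed.

Lemma phi_pos s c t : 0 < phi s c t.
Proof. apply exp_pos. Qed.

Lemma exp_small y : 0 < y -> exp (- (y * y)) <= / (y * y).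
Proof.
  intros Hy. rewrite exp_Ropp. apply Rinv_le_contravar. nra.
  pose proof (exp_ineq1_le (y*y)). lra.
Qed.

Lemma gauss0 s : 0 < s -> IIc (phi s 0) (s * sqrt (2 * PI)).
Proof.
  intros Hs. split. apply cont_phi.
  set (k := s * sqrt 2).
  assert (Hk : 0 < k) by (unfold k; apply Rmult_lt_0_compat; auto; apply sqrt_lt_R0; lra).
  assert (Hk2 : k * k = 2 * s ^ 2) by (unfold k; replace (s * sqrt 2 * (s * sqrt 2)) with (s * s * (sqrt 2 * sqrt 2)) by ring; rewrite sqrt_sqrt by lra; ring).
  assert (E : forall n, RInt (phi s 0) (- INR n) (INR n) = k * RInt gf (- (INR n / k)) (INR n / k)).
  { intros n. transitivity (RInt (phi s 0) (k * (- (INR n / k)) + 0) (k * (INR n / k) + 0)).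
    f_equal; simpl; field; lra.
    rewrite <- (RInt_comp_lin (V:=R_CompleteNormedModule)).
    rewrite <- (RInt_scal (V:=R_CompleteNormedModule)). apply RInt_ext. intros y _.
    unfold scal; simpl; unfold mult; simpl. rfix. f_equal. unfold phi, gf. f_equal.
    replace (2 * s ^ 2) with (k * k) by auto. field. lra. apply ex_RInt_gf. apply cont_ex, cont_phi. }
  assert (Hpi : s * sqrt (2 * PI) = k * sqrt PI).
  { unfold k. rewrite sqrt_mult by (try lra; pose proof PI_RGT_0; lra). ring. }
  rewrite Hpi.
  intros e He.
  assert (Hk3 : 0 < 4 * k * (k * k)) by (apply Rmult_lt_0_compat; [lra| apply Rmult_lt_0_compat; lra]).
  destruct (archimed_cor1 (e / (4 * k * (k * k)))) as [N [HN1 HN2]].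
  apply Rdiv_lt_0_compat; lra.
  exists N. intros n Hn. unfold Rdist. rewrite E.
  assert (HnN : INR N <= INR n) by (apply le_INR; lia).
  assert (HN0 : 0 < INR N) by (apply lt_0_INR; lia).
  assert (Hy : 0 < INR n / k) by (apply Rdiv_lt_0_compat; lra).
  assert (B := J_bound (INR n / k) Hy).
  assert (B2 := exp_small _ Hy).
  replace (k * RInt gf (- (INR n / k)) (INR n / k) - k * sqrt PI) with (k * (RInt gf (- (INR n / k)) (INR n / k) - sqrt PI)) by ring.
  rewrite Rabs_mult, (Rabs_right k) by lra.
  apply Rle_lt_trans with (k * (4 * / (INR n / k * (INR n / k)))).
  apply Rmult_le_compat_l. lra. apply Rle_trans with (1 := B). lra.
  replace (k * (4 * / (INR n / k * (INR n / k)))) with (4 * k * (k * k) * / INR n * / INR n) by (field; lra).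
  assert (/ INR n <= / INR N) by (apply Rinv_le_contravar; lra).
  assert (/ INR n <= 1).
  { assert (1 <= INR N) by (replace 1 with (INR 1) by reflexivity; apply le_INR; lia).
    apply Rle_trans with (/ INR N); auto. rewrite <- Rinv_1. apply Rinv_le_contravar; lra. }
  assert (0 < / INR n) by (apply Rinv_0_lt_compat; lra).
  apply Rle_lt_trans with (4 * k * (k * k) * / INR N * 1).
  apply Rmult_le_compat. assert (0 < 4 * k * (k * k) * / INR n) by (apply Rmult_lt_0_compat; lra). lra. lra.
  apply Rmult_le_compat_l; lra. auto.
  rewrite Rmult_1_r. apply Rmult_lt_reg_l with (/ (4 * k * (k * k))). apply Rinv_0_lt_compat; lra.
  rewrite <- Rmult_assoc, Rinv_l, Rmult_1_l by lra. unfold Rdiv in HN1. lra.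
Qed.

Lemma gauss_c s c : 0 < s -> IIc (phi s c) (s * sqrt (2 * PI)).
Proof.
  intros Hs. apply IIc_ext with (fun t => phi s 0 (t + - c)).
  intros t; unfold phi; replace (t + - c - 0) with (t - c) by ring; reflexivity.
  apply IIc_shift. apply gauss0; auto. intros; apply Rlt_le, phi_pos.
Qed.

Lemma gauss_tilt s c b : 0 < s ->
  IIc (fun t => phi s c t * exp (b * t)) (exp (b * c + b * b * s ^ 2 / 2) * (s * sqrt (2 * PI))).
Proof.
  intros Hs. apply IIc_ext with (fun t => exp (b * c + b * b * s ^ 2 / 2) * phi s (c + b * s ^ 2) t).
  intros t. unfold phi. rewrite <- !exp_plus. f_equal. field. lra.
  apply IIc_scal. apply gauss_c; auto.
Qed.

Lemma lip_cont g L : 0 <= L -> (forall x y, Rabs (g x - g y) <= L * Rabs (x - y)) -> cont g.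
Proof.
  intros HL H x eps Heps. exists (eps / (L + 1)). split. apply Rdiv_lt_0_compat; lra.
  intros y [_ Hy]. simpl in *. unfold R_dist in *.
  apply Rle_lt_trans with (L * Rabs (y - x)). apply H.
  apply Rle_lt_trans with (L * (eps / (L + 1))). apply Rmult_le_compat_l; lra.
  assert (H1: L * (eps/(L+1)) = eps - eps/(L+1)) by (field; lra).
  assert (0 < eps/(L+1)) by (apply Rdiv_lt_0_compat; lra). lra.
Qed.

Lemma cont_comp_lin g u al : cont g -> cont (fun t => g (u + al * t)).
Proof.
  intros H t. apply (continuity_pt_comp (fun t => u + al * t) g). 2: apply H.
  apply continuity_pt_plus. apply continuity_pt_const; intros x y; auto.
  apply continuity_pt_scal. apply derivable_continuous_pt, derivable_pt_id.
Qed.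

Lemma omega_bounds u : 0 < omega u <= 1.
Proof.
  unfold omega. pose proof (exp_pos (- (2 * u))). split.
  apply Rinv_0_lt_compat; lra. rewrite <- Rinv_1. apply Rinv_le_contravar; lra.
Qed.

Lemma omega_deriv t : derivable_pt_lim omega t (2 * exp (- (2 * t)) / ((1 + exp (- (2 * t))) * (1 + exp (- (2 * t))))).
Proof.
  apply is_derive_Reals. unfold omega.
  apply is_derive_ext with (fun t => / (1 + exp (- (2 * t)))). intros; reflexivity.
  auto_derive. pose proof (exp_pos (- (2 * t))); lra.
  pose proof (exp_pos (- (2 * t))). field. lra.
Qed.

Lemma omega_lip u v : Rabs (omega u - omega v) <= 1 * Rabs (u - v).
Proof.
  assert (Hd : forall c, Rabs (2 * exp (- (2 * c)) / ((1 + exp (- (2 * c))) * (1 + exp (- (2 * c))))) <= 1).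
  { intros c. pose proof (exp_pos (- (2 * c))). set (w := exp (- (2 * c))) in *.
    rewrite Rabs_right. apply Rmult_le_reg_r with ((1 + w) * (1 + w)). nra.
    unfold Rdiv. rewrite Rmult_assoc, Rinv_l by nra. nra.
    apply Rle_ge. apply Rle_mult_inv_pos; nra. }
  destruct (Rtotal_order u v) as [H|[H|H]].
  - destruct (MVT_cor2 omega _ u v H (fun c _ => omega_deriv c)) as [c [Hc _]].
    rewrite <- Rabs_Ropp, Ropp_minus_distr, Hc, Rabs_mult.
    rewrite <- (Rabs_Ropp (u - v)), Ropp_minus_distr. apply Rmult_le_compat_r. apply Rabs_pos. apply Hd.
  - subst. rewrite !Rminus_diag, Rabs_R0. lra.
  - destruct (MVT_cor2 omega _ v u H (fun c _ => omega_deriv c)) as [c [Hc _]].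
    rewrite Hc, Rabs_mult. apply Rmult_le_compat_r. apply Rabs_pos. apply Hd.
Qed.

Lemma omega_lower lam y : 0 <= lam <= 2 -> 1 - exp (- (lam * y)) <= omega y.
Proof.
  intros Hl. unfold omega. pose proof (exp_pos (- (2 * y))).
  assert (E: 1 - / (1 + exp (- (2 * y))) = / (1 + exp (2 * y))).
  { pose proof (exp_pos (2 * y)). set (A := exp (2 * y)) in *. set (B := exp (- (2 * y))) in *.
    assert (HAB : A * B = 1) by (unfold A, B; rewrite <- exp_plus; replace (2 * y + - (2 * y)) with 0 by ring; apply exp_0).
    replace (/ (1 + A)) with (B / (B + A * B)) by (field; split; nra).
    rewrite HAB. field. lra. }
  assert (/ (1 + exp (2 * y)) <= exp (- (lam * y))).
  { destruct (Rle_or_lt 0 y).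
    - apply Rle_trans with (exp (- (2 * y))).
      rewrite exp_Ropp. apply Rinv_le_contravar. apply exp_pos. lra.
      apply exp_le_mono. nra.
    - apply Rle_trans with 1. rewrite <- Rinv_1. apply Rinv_le_contravar. lra. pose proof (exp_pos (2*y)); lra.
      rewrite <- exp_0. apply exp_le_mono. nra. }
  lra.
Qed.

Definition IV (f : R -> R) : R := real (Lim_seq (fun n => RInt f (- INR n) (INR n))).

Lemma IV_eq f l : IIc f l -> IV f = l.
Proof.
  intros [_ H]. unfold IV. rewrite (is_lim_seq_unique _ l). reflexivity.
  apply is_lim_seq_Reals. auto.
Qed.

Fixpoint Om (s : R) (a c : nat -> R) (k : nat) (u : R) : R :=
  match k with
  | O => omega u
  | S k => IV (fun t => phi s (c k) t * Om s a c k (u + a k * t))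
  end.

Section OmS.
Variable s : R.
Variables a c : nat -> R.
Hypothesis Hs : 0 < s.
Let M := s * sqrt (2 * PI).

Lemma M_pos : 0 < M.
Proof. unfold M. apply Rmult_lt_0_compat; auto. apply sqrt_lt_R0. pose proof PI_RGT_0; lra. Qed.

Definition Good k := (forall u, 0 <= Om s a c k u <= M ^ k) /\
   (forall u v, Rabs (Om s a c k u - Om s a c k v) <= M ^ k * Rabs (u - v)).

Lemma Om_int k u : Good k -> IIc (fun t => phi s (c k) t * Om s a c k (u + a k * t)) (Om s a c (S k) u).
Proof.
  intros [HB HL].
  assert (Hc : cont (fun t => phi s (c k) t * Om s a c k (u + a k * t))).
  { apply cont_mult. apply cont_phi. apply cont_comp_lin. apply lip_cont with (M ^ k).
    apply pow_le. pose proof M_pos; lra. auto. }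
  destruct (IIc_exists _ (fun t => M ^ k * phi s (c k) t) (M ^ k * M) Hc) as [l [Hl _]].
  intros t. pose proof (phi_pos s (c k) t). destruct (HB (u + a k * t)). split. nra.
  rewrite Rmult_comm. apply Rmult_le_compat_r; lra.
  apply IIc_scal. apply gauss_c; auto.
  simpl. rewrite (IV_eq _ l Hl). auto.
Qed.

Lemma Om_good k : Good k.
Proof.
  induction k.
  - split. intros u; simpl; pose proof (omega_bounds u); lra. intros u v; simpl. apply omega_lip.
  - assert (HI := fun u => Om_int k u IHk). destruct IHk as [HB HL]. split.
    + intros u. split.
      * replace 0 with (0 * M) by ring. apply (IIc_le (fun t => 0 * phi s (c k) t) _ _ _ (IIc_scal _ _ 0 (gauss_c s (c k) Hs)) (HI u)).
        intros t. pose proof (phi_pos s (c k) t). destruct (HB (u + a k * t)). nra.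
      * simpl. replace (M * M ^ k) with (M ^ k * M) by ring.
        apply (IIc_le _ (fun t => M ^ k * phi s (c k) t) _ _ (HI u) (IIc_scal _ _ _ (gauss_c s (c k) Hs))).
        intros t. pose proof (phi_pos s (c k) t). destruct (HB (u + a k * t)).
        rewrite Rmult_comm. apply Rmult_le_compat_r; lra.
    + intros u v.
      assert (H1 := IIc_lin _ _ _ _ 1 (-1) (HI u) (HI v)).
      assert (H2 := IIc_scal _ _ (M ^ k * Rabs (u - v)) (gauss_c s (c k) Hs)).
      replace (Om s a c (S k) u - Om s a c (S k) v) with (1 * Om s a c (S k) u + -1 * Om s a c (S k) v) by ring.
      simpl (M ^ S k). replace (M * M ^ k * Rabs (u - v)) with (M ^ k * Rabs (u - v) * M) by ring.
      apply (IIc_abs _ _ _ _ H1 H2). intros t.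
      replace (1 * (phi s (c k) t * Om s a c k (u + a k * t)) + -1 * (phi s (c k) t * Om s a c k (v + a k * t)))
        with (phi s (c k) t * (Om s a c k (u + a k * t) - Om s a c k (v + a k * t))) by ring.
      rewrite Rabs_mult, Rabs_right by (apply Rle_ge, Rlt_le, phi_pos).
      rewrite (Rmult_comm _ (phi s (c k) t)). apply Rmult_le_compat_l. apply Rlt_le, phi_pos.
      replace (u - v) with ((u + a k * t) - (v + a k * t)) by ring. apply HL.
Qed.

Fixpoint PQ (lam : R) (k : nat) : R :=
  match k with
  | O => 1
  | S k => PQ lam k * (exp ((- lam * a k) * c k + (- lam * a k) * (- lam * a k) * s ^ 2 / 2) * M)
  end.

Lemma Om_lower lam k u : 0 <= lam <= 2 -> M ^ k - exp (- (lam * u)) * PQ lam k <= Om s a c k u.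
Proof.
  intros Hl. revert u. induction k; intros u.
  - simpl. rewrite Rmult_1_r. pose proof (omega_lower lam u Hl). lra.
  - assert (HI := Om_int k u (Om_good k)).
    assert (HG := IIc_lin _ _ _ _ (M ^ k) (- (exp (- (lam * u)) * PQ lam k)) (gauss_c s (c k) Hs)
                     (gauss_tilt s (c k) (- lam * a k) Hs)).
    apply Rle_trans with (M ^ k * M + - (exp (- (lam * u)) * PQ lam k) * (exp (- lam * a k * c k + - lam * a k * (- lam * a k) * s ^ 2 / 2) * M)).
    right. simpl. unfold M. ring.
    apply (IIc_le _ _ _ _ HG HI). intros t.
    specialize (IHk (u + a k * t)). pose proof (phi_pos s (c k) t).
    replace (exp (- (lam * (u + a k * t)))) with (exp (- (lam * u)) * exp (- lam * a k * t)) in IHk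
      by (rewrite <- exp_plus; f_equal; ring).
    nra.
Qed.

End OmS.

Fixpoint pr (s : R) (c : nat -> R) (k : nat) (x : nat -> R) : R :=
  match k with
  | O => 1
  | S k => pr s c k x * phi s (c k) (x k)
  end.

Lemma upd_other x j t i : (i < j)%nat -> upd x j t i = x i.
Proof. intros H. unfold upd. destruct (Nat.eqb_spec i j). lia. auto. Qed.

Lemma upd_same x j t : upd x j t j = t.
Proof. unfold upd. rewrite Nat.eqb_refl. auto. Qed.

Lemma dot_upd k j a x t : (k <= j)%nat -> dot k a (upd x j t) = dot k a x.
Proof.
  induction k; intros H; simpl; auto. rewrite IHk by lia. rewrite upd_other by lia. auto.
Qed.

Lemma pr_upd s c k j x t : (k <= j)%nat -> pr s c k (upd x j t) = pr s c k x.
Proof.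
  induction k; intros H; simpl; auto. rewrite IHk by lia. rewrite upd_other by lia. auto.
Qed.

Lemma IIc_imp f l : IIc f l -> improper_int f l.
Proof.
  intros [Hf Hl]. exists (fun n => RInt f (- INR n) (INR n)). split; auto.
  intros n. exists (ex_RInt_Reals_0 _ _ _ (cont_ex f _ _ Hf)). rewrite <- RInt_Reals. auto.
Qed.

Lemma A_int s a c (Hs : 0 < s) k : forall u cst,
  int_Rd k (fun x => cst * omega (u + dot k a x) * pr s c k x) (cst * Om s a c k u).
Proof.
  induction k; intros u cst.
  - simpl. rewrite Rplus_0_r, Rmult_1_r. auto.
  - simpl. exists (fun t => cst * (phi s (c k) t * Om s a c k (u + a k * t))). split.
    + intros t.
      replace (fun x : nat -> R => cst * omega (u + (dot k a (upd x k t) + a k * upd x k t k)) * (pr s c k (upd x k t) * phi s (c k) (upd x k t k)))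
        with (fun x : nat -> R => (cst * phi s (c k) t) * omega ((u + a k * t) + dot k a x) * pr s c k x).
      replace (cst * (phi s (c k) t * Om s a c k (u + a k * t))) with ((cst * phi s (c k) t) * Om s a c k (u + a k * t)) by ring.
      apply IHk.
      apply functional_extensionality. intros x. rewrite dot_upd, pr_upd, upd_same by lia.
      replace (u + (dot k a x + a k * t)) with (u + a k * t + dot k a x) by ring. ring.
    + apply IIc_imp. apply IIc_scal. apply Om_int; auto. apply Om_good; auto.
Qed.

Lemma dot_scal k a x q : dot k (fun i => a i / q) x = dot k a x / q.
Proof. induction k; simpl. unfold Rdiv; ring. rewrite IHk. unfold Rdiv; ring. Qed.

Lemma exp_dot s c k x : exp (- (dot k (vsub x c) (vsub x c)) / (2 * s ^ 2)) = pr s c k x.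
Proof.
  induction k; simpl. unfold Rdiv. rewrite Ropp_0, Rmult_0_l. apply exp_0.
  rewrite <- IHk. unfold phi, vsub. rewrite <- exp_plus. f_equal. replace (2 * (s * (s * 1))) with (2 * s ^ 2) by ring. unfold Rdiv. ring.
Qed.

Lemma PQ_eq s a c lam k : PQ s a c lam k =
  (s * sqrt (2 * PI)) ^ k * exp (- lam * dot k a c + lam * lam * s ^ 2 / 2 * dot k a a).
Proof.
  induction k; simpl. rewrite Rmult_0_r, Rmult_0_r, Rplus_0_r, exp_0. ring.
  rewrite IHk. replace (s * (s * 1)) with (s ^ 2) by ring. replace (- lam * (dot k a c + a k * c k) + lam * lam * s ^ 2 / 2 * (dot k a a + a k * a k))
    with ((- lam * dot k a c + lam * lam * s ^ 2 / 2 * dot k a a) + (- lam * a k * c k + - lam * a k * (- lam * a k) * s ^ 2 / 2)) by field.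
  rewrite (exp_plus (- lam * dot k a c + lam * lam * s ^ 2 / 2 * dot k a a)). ring.
Qed.

Lemma dot_self_ge0 k x : 0 <= dot k x x.
Proof. induction k; simpl. lra. nra. Qed.

Lemma dot_self_pos k x i : (i < k)%nat -> x i <> 0 -> 0 < dot k x x.
Proof.
  induction k; intros H Hx. lia. simpl. destruct (Nat.eq_dec i k).
  subst. pose proof (dot_self_ge0 k x). assert (0 < x k * x k) by (apply Rsqr_pos_lt; auto). lra.
  assert (0 < dot k x x) by (apply IHk; auto; lia). nra.
Qed.

Lemma norm_const s d : 0 < s -> / Rpower (2 * PI * s ^ 2) (INR d / 2) * (s * sqrt (2 * PI)) ^ d = 1.
Proof.
  intros Hs. assert (HP := PI_RGT_0).
  assert (E : Rpower (2 * PI * s ^ 2) (INR d / 2) = (s * sqrt (2 * PI)) ^ d).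
  { assert (HX : 0 < 2 * PI * s ^ 2) by (apply Rmult_lt_0_compat; [lra|apply pow_lt; lra]).
    replace (INR d / 2) with (/ 2 * INR d) by field. rewrite <- Rpower_mult. rewrite Rpower_sqrt by auto.
    rewrite Rpower_pow by (apply sqrt_lt_R0; auto). f_equal.
    rewrite sqrt_mult by (try lra; pose proof (pow2_ge_0 s); lra).
    rewrite sqrt_pow2 by lra. ring. }
  rewrite E. apply Rinv_l. apply pow_nonzero. assert (0 < sqrt (2 * PI)) by (apply sqrt_lt_R0; lra). nra.
Qed.
Lemma final_ineq mu v A B : 0 < A -> A < B -> A <= mu -> 0 <= v -> v <= B ->
  exists lam, 0 <= lam <= 2 /\ -lam*mu + lam*lam*v/2 < - (A*A/B)/5.
Proof.
  intros HA HAB Hmu Hv HvB.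
  assert (HT : A * A / B < A).
  { apply Rmult_lt_reg_r with B. lra. unfold Rdiv. rewrite Rmult_assoc, Rinv_l by lra. nra. }
  assert (HT0 : 0 < A * A / B) by (apply Rdiv_lt_0_compat; nra).
  destruct (Rle_or_lt mu (2 * v)) as [H|H].
  - assert (Hv0 : 0 < v) by lra.
    exists (mu / v). split. split. unfold Rdiv; apply Rmult_le_pos; [lra| left; apply Rinv_0_lt_compat; lra].
    apply Rmult_le_reg_r with v. lra. unfold Rdiv. rewrite Rmult_assoc, Rinv_l by lra. lra.
    replace (- (mu / v) * mu + mu / v * (mu / v) * v / 2) with (- (mu * mu / v) / 2) by (field; lra).
    assert (A * A / B <= mu * mu / v).
    { apply Rle_trans with (mu * mu / B). unfold Rdiv. apply Rmult_le_compat_r. left; apply Rinv_0_lt_compat; lra. nra.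
      unfold Rdiv. apply Rmult_le_compat_l. nra. apply Rinv_le_contravar; lra. }
    lra.
  - exists 2. split. lra. nra.
Qed.

Lemma dot_scal2 k x y q : dot k x (fun i => y i / q) = dot k x y / q.
Proof. induction k; simpl. unfold Rdiv; ring. rewrite IHk. unfold Rdiv; ring. Qed.

Theorem mainTheorem13 (d : nat) (sigma : R) (thstar : nat -> R) (a r : R)
  (th : nat -> R) :
  (1 <= d)%nat -> 0 < sigma ->
  (exists i : nat, (i < d)%nat /\ thstar i <> 0) ->
  0 < a < 1 -> 1 <= r ->
  in_D d thstar a r th ->
  exists E : R,
    gauss_expect d thstar sigma (fun x => omega (dot d th x / sigma ^ 2)) E /\
    E > 1 - exp (- ((a * (vnorm d thstar / sigma) / r) ^ 2) / 5).
Proof.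
  intros Hd Hs [i [Hi Hne]] Ha Hr [HH HB].
  set (al := fun i => th i / sigma ^ 2).
  set (N := / Rpower (2 * PI * sigma ^ 2) (INR d / 2)).
  assert (HN : 0 < N) by (unfold N, Rpower; apply Rinv_0_lt_compat, exp_pos).
  exists (N * Om sigma al thstar d 0). split.
  - unfold gauss_expect.
    replace (fun x => omega (dot d th x / sigma ^ 2) * gauss_density d thstar sigma x)
      with (fun x => N * omega (0 + dot d al x) * pr sigma thstar d x).
    apply A_int; auto.
    apply functional_extensionality. intros x. unfold gauss_density. rewrite exp_dot.
    unfold al. rewrite dot_scal. fold N. rewrite Rplus_0_l. ring.
  - set (S2 := dot d thstar thstar). set (P := dot d th thstar). set (V := dot d th th).
    assert (HS2 : 0 < S2) by (apply (dot_self_pos d thstar i); auto).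
    assert (HV : 0 <= V) by apply dot_self_ge0.
    assert (Hs2 : 0 < sigma ^ 2) by (apply pow_lt; auto).
    unfold in_H in HH. unfold in_B in HB. unfold vnorm in *. fold S2 P V in HH, HB |- *.
    rewrite pow2_sqrt in HH by lra.
    assert (HVB : V <= r * r * S2).
    { assert (0 <= sqrt V) by apply sqrt_pos. assert (0 <= sqrt S2) by apply sqrt_pos.
      rewrite <- (pow2_sqrt V), <- (pow2_sqrt S2) by lra.
      assert (sqrt V * sqrt V <= (r * sqrt S2) * (r * sqrt S2)) by (apply Rmult_le_compat; lra).
      simpl. nra. }
    destruct (final_ineq (P / sigma ^ 2) (V / sigma ^ 2) (a * S2 / sigma ^ 2) (r * r * S2 / sigma ^ 2))
      as [lam [Hl Hlt]].
    + apply Rdiv_lt_0_compat; nra.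
    + unfold Rdiv. apply Rmult_lt_compat_r. apply Rinv_0_lt_compat; lra. assert (1 <= r * r) by nra. nra.
    + unfold Rdiv. apply Rmult_le_compat_r. left; apply Rinv_0_lt_compat; lra. lra.
    + unfold Rdiv. apply Rmult_le_pos. lra. left; apply Rinv_0_lt_compat; lra.
    + unfold Rdiv. apply Rmult_le_compat_r. left; apply Rinv_0_lt_compat; lra. lra.
    + assert (HL := Om_lower sigma al thstar Hs lam d 0 Hl).
      rewrite PQ_eq in HL. rewrite Rmult_0_r, Ropp_0, exp_0, Rmult_1_l in HL.
      assert (E1 : dot d al thstar = P / sigma ^ 2) by (unfold al; rewrite dot_scal; auto).
      assert (E2 : dot d al al = V / sigma ^ 2 / sigma ^ 2).
      { unfold al at 2. rewrite dot_scal2. unfold al. rewrite dot_scal. auto. }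
      rewrite E1, E2 in HL.
      assert (E3 : - lam * (P / sigma ^ 2) + lam * lam * sigma ^ 2 / 2 * (V / sigma ^ 2 / sigma ^ 2)
                 = - lam * (P / sigma ^ 2) + lam * lam * (V / sigma ^ 2) / 2) by (field; lra).
      rewrite E3 in HL.
      assert (E4 : (a * (sqrt S2 / sigma) / r) ^ 2 = a * S2 / sigma ^ 2 * (a * S2 / sigma ^ 2) / (r * r * S2 / sigma ^ 2)).
      { replace ((a * (sqrt S2 / sigma) / r) ^ 2) with (a * a * (sqrt S2 ^ 2) / (sigma ^ 2 * r * r)) by (field; lra).
        rewrite pow2_sqrt by lra. field. repeat split; lra. }
      rewrite E4.
      set (X := exp (- lam * (P / sigma ^ 2) + lam * lam * (V / sigma ^ 2) / 2)) in *.
      assert (HX : X < exp (- (a * S2 / sigma ^ 2 * (a * S2 / sigma ^ 2) / (r * r * S2 / sigma ^ 2)) / 5)).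
      { apply exp_increasing. replace (- lam * (P / sigma ^ 2)) with (- lam * (P / sigma ^ 2)) by ring.
        replace (- (a * S2 / sigma ^ 2 * (a * S2 / sigma ^ 2) / (r * r * S2 / sigma ^ 2)) / 5)
          with (- (a * S2 / sigma ^ 2 * (a * S2 / sigma ^ 2) / (r * r * S2 / sigma ^ 2)) / 5) by ring.
        replace (- lam * (P / sigma ^ 2) + lam * lam * (V / sigma ^ 2) / 2) with
          (- lam * (P / sigma ^ 2) + lam * lam * (V / sigma ^ 2) / 2) by ring.
        lra. }
      assert (HNM := norm_const sigma d Hs). fold N in HNM.
      apply Rlt_gt. apply Rlt_le_trans with (N * ((sigma * sqrt (2 * PI)) ^ d - (sigma * sqrt (2 * PI)) ^ d * X)).
      replace (N * ((sigma * sqrt (2 * PI)) ^ d - (sigma * sqrt (2 * PI)) ^ d * X)) with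
        ((N * (sigma * sqrt (2 * PI)) ^ d) * (1 - X)) by ring. rewrite HNM. lra.
      apply Rmult_le_compat_l; lra.
Qed.
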